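(* Equip $\mathbb{R}^{1,1}$ with the Minkowski inner product $x\cdot y=-x_0y_0+x_1y_1$. Let $\theta_0,\theta_1,\theta_2\in\mathbb{R}$ with $\theta_0\neq\theta_1$ and $\theta_0\neq\theta_2$, and let $P_i=(\sinh\theta_i,\cosh\theta_i)$ for $i=0,1,2$; these are points on the branch $x_1>0$ of the hyperbola $-x_0^2+x_1^2=1$. Then the chords $P_0P_1$ and $P_0P_2$ are timelike, and the pseudo-angle $\theta$ between them satisfies $$\cosh^2(\theta)=\cosh^2\left(\frac{\theta_1-\theta_2}{2}\right).$$ In particular, $\theta$ does not depend on the position of $P_0$ (i.e. on $\theta_0$).
   Context: A vector $x\in\mathbb{R}^{1,1}$ is timelike if $x\cdot x<0$ and spacelike if $x\cdot x>0$. For two vectors $x,y$ that are both timelike or both spacelike, one has $(x\cdot y)^2\ge (x\cdot x)(y\cdot y)$, and the pseudo-angle $\theta\ge 0$ between them is defined by $\cosh^2(\theta)=\frac{(x\cdot y)^2}{(x\cdot x)(y\cdot y)}$. The pseudo-angle between two chords (line segments) is the pseudo-angle between their direction vectors. *)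

(* Defs.v *)
From Stdlib Require Import Reals Lra.
Open Scope R_scope.

Definition mdot (x y : R * R) : R := - (fst x * fst y) + snd x * snd y.

Definition timelike (x : R * R) : Prop := mdot x x < 0.
Definition spacelike (x : R * R) : Prop := mdot x x > 0.

Definition is_pseudo_angle (x y : R * R) (theta : R) : Prop :=
  ((timelike x /\ timelike y) \/ (spacelike x /\ spacelike y)) /\
  0 <= theta /\
  (cosh theta) ^ 2 = (mdot x y) ^ 2 / (mdot x x * mdot y y).

Definition hpt (t : R) : R * R := (sinh t, cosh t).

Definition chord (P Q : R * R) : R * R := (fst Q - fst P, snd Q - snd P).

(* Main.v *)
Require Import Defs.
From Stdlib Require Import Reals Lra.
Open Scope R_scope.

Lemma pow2_gt_0_wrap (x:R) : x <> 0 -> x^2 > 0.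
Proof. intro; simpl; rewrite Rmult_1_r; apply Rsqr_pos_lt; auto. Qed.

Lemma hexp (t : R) : exists a, 0 < a /\ sinh t = (a*a - /(a*a))/2 /\ cosh t = (a*a + /(a*a))/2.
Proof.
  exists (exp (t/2)). split. apply exp_pos.
  assert (E : exp (t/2) * exp (t/2) = exp t) by (rewrite <- exp_plus; f_equal; field).
  rewrite E. unfold sinh, cosh. rewrite exp_Ropp. split; reflexivity.
Qed.

Lemma cexp (t1 t2 a1 a2 : R) : 0 < a1 -> 0 < a2 -> exp (t1/2) = a1 -> exp (t2/2) = a2 ->
  cosh ((t1 - t2)/2) = (a1/a2 + a2/a1)/2.
Proof.
  intros. unfold cosh. replace ((t1-t2)/2) with (t1/2 + - (t2/2)) by field.
  rewrite exp_plus, exp_Ropp, Ropp_plus_distr, Ropp_involutive, exp_plus, exp_Ropp. subst. field. lra.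
Qed.

Theorem mainTheorem1 (t0 t1 t2 : R) (h01 : t0 <> t1) (h02 : t0 <> t2) :
  timelike (chord (hpt t0) (hpt t1)) /\ timelike (chord (hpt t0) (hpt t2)) /\
  (exists theta, is_pseudo_angle (chord (hpt t0) (hpt t1)) (chord (hpt t0) (hpt t2)) theta) /\
  (forall theta, is_pseudo_angle (chord (hpt t0) (hpt t1)) (chord (hpt t0) (hpt t2)) theta ->
     (cosh theta) ^ 2 = (cosh ((t1 - t2) / 2)) ^ 2).
Proof.
  set (a0 := exp (t0/2)). set (a1 := exp (t1/2)). set (a2 := exp (t2/2)).
  assert (p0 : 0 < a0) by apply exp_pos.
  assert (p1 : 0 < a1) by apply exp_pos.
  assert (p2 : 0 < a2) by apply exp_pos.
  assert (n01 : a1 - a0 <> 0).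
  { intro H. apply h01. assert (t0/2 = t1/2) by (apply exp_inv; unfold a0, a1 in H; lra). lra. }
  assert (n02 : a2 - a0 <> 0).
  { intro H. apply h02. assert (t0/2 = t2/2) by (apply exp_inv; unfold a0, a2 in H; lra). lra. }
  assert (HC := cexp t1 t2 a1 a2 p1 p2 eq_refl eq_refl).
  assert (Hs : forall t a, exp (t/2) = a -> sinh t = (a*a - /(a*a))/2 /\ cosh t = (a*a + /(a*a))/2).
  { intros t a <-. assert (E : exp (t/2) * exp (t/2) = exp t) by (rewrite <- exp_plus; f_equal; field).
    rewrite E. unfold sinh, cosh. rewrite exp_Ropp. split; reflexivity. }
  destruct (Hs t0 a0 eq_refl) as [s0 c0].
  destruct (Hs t1 a1 eq_refl) as [s1 c1].
  destruct (Hs t2 a2 eq_refl) as [s2 c2].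
  assert (VV : forall ai t, exp (t/2) = ai -> 0 < ai -> ai - a0 <> 0 ->
     mdot (chord (hpt t0) (hpt t)) (chord (hpt t0) (hpt t)) = - (((ai*ai - a0*a0)/(a0*ai))^2) /\
     ((ai*ai - a0*a0)/(a0*ai))^2 > 0).
  { intros ai t Ht pi ni. destruct (Hs t ai Ht) as [si ci].
    unfold mdot, chord, hpt; simpl. rewrite s0, c0, si, ci. split.
    - field. lra.
    - apply pow2_gt_0_wrap. unfold Rdiv. apply Rmult_integral_contrapositive. split.
      + replace (ai*ai - a0*a0) with ((ai-a0)*(ai+a0)) by ring.
        apply Rmult_integral_contrapositive. split; lra.
      + apply Rinv_neq_0_compat. nra. }
  destruct (VV a1 t1 eq_refl p1 n01) as [V1 P1].
  destruct (VV a2 t2 eq_refl p2 n02) as [V2 P2].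
  assert (VW : mdot (chord (hpt t0) (hpt t1)) (chord (hpt t0) (hpt t2)) ^ 2
     = cosh ((t1 - t2)/2) ^ 2 * (mdot (chord (hpt t0) (hpt t1)) (chord (hpt t0) (hpt t1)) *
        mdot (chord (hpt t0) (hpt t2)) (chord (hpt t0) (hpt t2)))).
  { rewrite V1, V2, HC. unfold mdot, chord, hpt; simpl. rewrite s0, c0, s1, c1, s2, c2.
    field. lra. }
  assert (T1 : timelike (chord (hpt t0) (hpt t1))) by (unfold timelike; lra).
  assert (T2 : timelike (chord (hpt t0) (hpt t2))) by (unfold timelike; lra).
  assert (PQ : mdot (chord (hpt t0) (hpt t1)) (chord (hpt t0) (hpt t1)) *
        mdot (chord (hpt t0) (hpt t2)) (chord (hpt t0) (hpt t2)) <> 0).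
  { rewrite V1, V2. nra. }
  split; [exact T1|]. split; [exact T2|]. split.
  - exists (Rabs ((t1 - t2)/2)). split; [left; tauto|]. split; [apply Rabs_pos|].
    rewrite VW. assert (cosh (Rabs ((t1-t2)/2)) = cosh ((t1-t2)/2)).
    { unfold Rabs. destruct (Rcase_abs _); [|reflexivity]. unfold cosh. rewrite Ropp_involutive. lra. }
    rewrite H. field. split; intro Z; apply PQ; rewrite Z; ring.
  - intros th [_ [_ E]]. rewrite E, VW. field. split; intro Z; apply PQ; rewrite Z; ring.
Qed.
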